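(* Let $p\in{\cal H}_R$ be a primitive element such that $\pi_c(p)=0$. Then $p=0$.
   Context: A rooted tree is a finite connected and simply connected graph with a distinguished vertex (the root), edges oriented away from the root. ${\cal H}_R$ is the commutative polynomial algebra over $\mathbb{Q}$ on isomorphism classes of rooted trees; its monomials (forests) form a basis, $1$ being the empty forest. An admissible cut $C$ of a tree $t$ is a nonempty set of edges such that every path from the root to a vertex contains at most one edge of $C$; removing them gives a forest in which $R^C(t)$ is the tree containing the root and $P^C(t)$ the product of the others. The coproduct is the algebra morphism $\Delta$ with $\Delta(t)=1\otimes t+t\otimes1+\sum_CP^C(t)\otimes R^C(t)$ on trees; $p$ is primitive iff $\Delta(p)=p\otimes1+1\otimes p$. $\pi_c$ is the linear projection of ${\cal H}_R$ onto the span of rooted trees which vanishes on every forest that is not a single tree (including the empty forest). *)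

(* Defs.v *)
From mathcomp Require Import all_boot all_order all_algebra.
Set Implicit Arguments. Unset Strict Implicit. Unset Printing Implicit Defensive.
Import GRing.Theory.
Local Open Scope ring_scope.

(* Planar representatives of rooted trees: a root with an ordered list of
   subtrees (edges go from the root to the roots of the subtrees). *)
Inductive tree := Node of seq tree.

(* A forest (monomial of H_R) is represented by a list of trees;
   the empty list is the empty forest 1. *)
Definition forest := seq tree.

Fixpoint lexle (s t : seq nat) : bool :=
  match s, t with
  | [::], _ => true
  | _ :: _, [::] => false
  | x :: s', y :: t' => (x < y)%N || ((x == y) && lexle s' t')
  end.

(* Canonical (AHU) code of a tree: two planar trees are isomorphic as
   rooted trees iff their codes coincide. *)
Fixpoint tcode (t : tree) : seq nat :=
  let: Node ts := t in 0%N :: flatten (sort lexle (map tcode ts)) ++ [:: 1%N].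

(* Canonical key of a forest: the multiset of isomorphism classes of its
   trees, i.e. the monomial it represents. *)
Definition fkey (f : forest) : seq (seq nat) := sort lexle (map tcode f).

(* Elements of H_R: finite formal Q-linear combinations of forests. *)
Definition H := seq (rat * forest).
Definition coeff (p : H) (f : forest) : rat :=
  \sum_(x <- p | fkey x.2 == fkey f) x.1.

(* Elements of H_R (x) H_R: combinations of pairs of forests (basis f (x) g). *)
Definition H2 := seq (rat * (forest * forest)).
Definition coeff2 (q : H2) (f g : forest) : rat :=
  \sum_(x <- q | (fkey x.2.1 == fkey f) && (fkey x.2.2 == fkey g)) x.1.

(* All admissible cuts of a tree, INCLUDING the empty cut, each given as
   (P^C(t) as a list of trees, R^C(t)).  For each child c of the root either
   the edge to c is cut (c goes to P), or one recursively takes a (possibly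
   empty) admissible cut of c. *)
Fixpoint allcuts (t : tree) : seq (forest * tree) :=
  let: Node ts := t in
  let fix go (l : seq tree) : seq (forest * forest) :=
    match l with
    | [::] => [:: ([::], [::])]
    | c :: l' =>
        [seq (a.1 ++ b.1, a.2 ++ b.2)
        | a <- ([:: ([:: c], [::])] ++ [seq (x.1, [:: x.2]) | x <- allcuts c]),
          b <- go l']
    end in
  [seq (x.1, Node x.2) | x <- go ts].

(* Nonempty admissible cuts: exactly those producing a nonempty P^C(t). *)
Definition cuts (t : tree) : seq (forest * tree) :=
  [seq x <- allcuts t | size x.1 != 0%N].

Definition Delta_tree (t : tree) : H2 :=
  [:: (1, ([::], [:: t])); (1, ([:: t], [::]))] ++
  [seq (1, (x.1, [:: x.2])) | x <- cuts t].

Definition mul2 (a b : H2) : H2 :=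
  [seq (x.1 * y.1, (x.2.1 ++ y.2.1, x.2.2 ++ y.2.2)) | x <- a, y <- b].

Definition Delta_forest (f : forest) : H2 :=
  foldr mul2 [:: (1, ([::], [::]))] (map Delta_tree f).

Definition Delta (p : H) : H2 :=
  flatten [seq [seq (x.1 * y.1, y.2) | y <- Delta_forest x.2] | x <- p].

Definition prim_rhs (p : H) : H2 :=
  [seq (x.1, (x.2, [::])) | x <- p] ++ [seq (x.1, ([::], x.2)) | x <- p].

Definition primitive (p : H) : Prop :=
  forall f g : forest, coeff2 (Delta p) f g = coeff2 (prim_rhs p) f g.

(* pi_c p = 0 : every single-tree coefficient vanishes *)
Definition pic_zero (p : H) : Prop := forall t : tree, coeff p [:: t] = 0.

Definition H_zero (p : H) : Prop := forall f : forest, coeff p f = 0.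

(* Main.v *)
From HB Require Import structures.
Require Import Defs.
From mathcomp Require Import all_boot all_order all_algebra.
Set Implicit Arguments. Unset Strict Implicit. Unset Printing Implicit Defensive.
Import GRing.Theory Num.Theory.

Fixpoint InT (c : tree) (l : seq tree) : Prop :=
  match l with [::] => False | c' :: l' => c' = c \/ InT c l' end.

Definition tree_ind2 (P : tree -> Prop)
  (IH : forall ts, (forall c, InT c ts -> P c) -> P (Node ts)) : forall t, P t :=
  fix F t := let: Node ts := t in IH ts
    ((fix G (l : seq tree) : forall c, InT c l -> P c :=
       match l with
       | [::] => fun c h => match h with end
       | c' :: l' => fun c h => match h with
                    | or_introl e => eq_ind c' P (F c') c e
                    | or_intror h' => G l' c h' end
       end) ts).

Fixpoint enc (t : tree) : GenTree.tree nat :=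
  let: Node ts := t in GenTree.Node 0 (map enc ts).
Fixpoint dec (t : GenTree.tree nat) : tree :=
  match t with GenTree.Leaf _ => Node [::] | GenTree.Node _ l => Node (map dec l) end.
Lemma encK : cancel enc dec.
Proof.
elim/tree_ind2 => ts IH /=; congr Node.
elim: ts IH => //= c l IHl H; rewrite H; last by left.
by rewrite IHl // => c' h; apply: H; right.
Qed.
HB.instance Definition _ := Countable.copy tree (can_type encK).

Lemma In_mem (l : seq tree) c : c \in l -> InT c l.
Proof. elim: l => //= a l IH; rewrite inE => /predU1P [->|/IH]; [by left|by right]. Qed.

Lemma lexle_total : total lexle.
Proof.
elim=> [|x s IH] [|y t] //=; case: (ltngtP x y) => //= ->; rewrite eqxx /=; exact: IH.
Qed.
Lemma lexle_trans : transitive lexle.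
Proof.
move=> y x; elim: x y => [|a s IH] [|b t] [|c u] //=.
case/orP => [ab|/andP[/eqP-> st]]; case/orP => [bc|/andP[/eqP<- tu]].
- by rewrite (ltn_trans ab bc).
- by rewrite ab.
- by rewrite bc.
- by rewrite eqxx (IH _ _ st tu) orbT.
Qed.
Lemma lexle_anti : antisymmetric lexle.
Proof.
elim=> [|a s IH] [|b t] //= /andP[].
case/orP=> [ab|/andP[/eqP ab st]]; case/orP => [ba|/andP[/eqP ba ts]].
- by move: (ltn_trans ab ba); rewrite ltnn.
- by rewrite ba ltnn in ab.
- by rewrite ab ltnn in ba.
- by rewrite ab (IH t) // st ts.
Qed.

Lemma fkeyP (u v : forest) : reflect (fkey u = fkey v) (perm_eq (map tcode u) (map tcode v)).
Proof. exact: (perm_sortP lexle_total lexle_trans lexle_anti). Qed.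

Lemma fkey_perm (u : forest) : perm_eq (fkey u) (map tcode u).
Proof. by rewrite /fkey perm_sort. Qed.

Lemma fkey_cat (u v : forest) : fkey (u ++ v) = sort lexle (fkey u ++ fkey v).
Proof.
rewrite /fkey; apply/(perm_sortP lexle_total lexle_trans lexle_anti).
by rewrite map_cat perm_sym; apply: perm_cat; rewrite perm_sort.
Qed.

Lemma size_fkey (u : forest) : size (fkey u) = size u.
Proof. by rewrite /fkey size_sort size_map. Qed.

Lemma tcode_node ts : tcode (Node ts) = 0%N :: flatten (fkey ts) ++ [:: 1%N].
Proof. by []. Qed.

Definition zc (w : seq nat) := count (pred1 0%N) w.
Definition oc (w : seq nat) := count (fun x => x != 0%N) w.
Arguments zc : simpl never.
Arguments oc : simpl never.
Definition Bal w := zc w = oc w /\ forall k, (oc (take k w) <= zc (take k w))%N.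
Definition Prm w := Bal w /\ (0 < size w)%N /\
   forall k, (0 < k < size w)%N -> (oc (take k w) < zc (take k w))%N.

Lemma zc_cat u v : zc (u ++ v) = (zc u + zc v)%N. Proof. exact: count_cat. Qed.
Lemma oc_cat u v : oc (u ++ v) = (oc u + oc v)%N. Proof. exact: count_cat. Qed.
Lemma zc0 w : zc (0%N :: w) = (zc w).+1. Proof. by []. Qed.
Lemma oc0 w : oc (0%N :: w) = oc w. Proof. by []. Qed.
Lemma zc1 w : zc (1%N :: w) = zc w. Proof. by []. Qed.
Lemma oc1 w : oc (1%N :: w) = (oc w).+1. Proof. by []. Qed.
Lemma zcn : zc [::] = 0%N. Proof. by []. Qed.
Lemma ocn : oc [::] = 0%N. Proof. by []. Qed.

Lemma bal_cat u v : Bal u -> Bal v -> Bal (u ++ v).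
Proof.
move=> [Hu Ku] [Hv Kv]; split; first by rewrite zc_cat oc_cat Hu Hv.
move=> k; rewrite take_cat; case: ifP => _; first exact: Ku.
rewrite zc_cat oc_cat Hu leq_add2l; exact: Kv.
Qed.

Lemma bal_flatten L : (forall w, w \in L -> Bal w) -> Bal (flatten L).
Proof.
elim: L => [|w L IH] H /=; first by split => // k.
apply: bal_cat; first by apply: H; rewrite inE eqxx.
by apply: IH => w' h; apply: H; rewrite inE h orbT.
Qed.

Lemma prm_wrap X : Bal X -> Prm (0%N :: X ++ [:: 1%N]).
Proof.
move=> [HX KX]; have o1 : forall j, (oc (take j [:: 1%N]) <= 1)%N by case.
have z0 : forall j, zc (take j [:: 1%N]) = 0%N by case.
split; [split|split].
- by rewrite zc0 oc0 zc_cat oc_cat zc1 oc1 zcn ocn HX addn0 addn1.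
- case=> [|k] //=; rewrite take_cat; case: ifP => _.
    by rewrite zc0 oc0 ltnW // ltnS.
  rewrite zc0 oc0 zc_cat oc_cat z0 HX addn0.
  by apply: leq_trans (leq_add (leqnn _) (o1 _)) _; rewrite addn1.
- by [].
- case=> [|k] // /andP[_ Hk]; move: Hk; rewrite /= size_cat /= addn1 ltnS => Hk /=.
  rewrite take_cat; case: ifP => Hk'.
    by rewrite zc0 oc0 ltnS.
  have -> : (k - size X = 0)%N by apply/eqP; rewrite subn_eq0 -ltnS.
  by rewrite take0 cats0 zc0 oc0 HX.
Qed.

Lemma prm_tcode t : Prm (tcode t).
Proof.
elim/tree_ind2: t => ts IH; rewrite tcode_node; apply: prm_wrap; apply: bal_flatten => w.
rewrite mem_sort => /mapP [c /In_mem cin ->]; exact: (IH c cin).1.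
Qed.

Lemma flatten_inj L L' : (forall w, w \in L -> Prm w) -> (forall w, w \in L' -> Prm w) ->
  flatten L = flatten L' -> L = L'.
Proof.
elim: L L' => [|u L IH] [|v L'] //= HL HL'.
- have [_ [Hv _]] := HL' v (mem_head _ _).
  by move/(congr1 size); rewrite size_cat /=; case: (size v) Hv.
- have [_ [Hu _]] := HL u (mem_head _ _).
  by move/(congr1 size); rewrite size_cat /=; case: (size u) Hu.
have [[Bu _] [Su Ku]] := HL u (mem_head _ _).
have [[Bv _] [Sv Kv]] := HL' v (mem_head _ _).
move=> E.
have Esz : size u = size v.
  case: (ltngtP (size u) (size v)) => // Hlt.
  - have : take (size u) (u ++ flatten L) = take (size u) (v ++ flatten L') by rewrite E.
    rewrite take_size_cat // take_cat Hlt => Eu.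
    by have := Kv (size u); rewrite Su Hlt -Eu Bu ltnn => /(_ isT).
  - have : take (size v) (u ++ flatten L) = take (size v) (v ++ flatten L') by rewrite E.
    rewrite take_cat Hlt take_size_cat // => Ev.
    by have := Ku (size v); rewrite Sv Hlt Ev Bv ltnn => /(_ isT).
move/eqP: E; rewrite eqseq_cat // => /andP[/eqP -> /eqP E].
congr cons; apply: IH E => w h; [apply: HL|apply: HL']; rewrite inE h orbT //.
Qed.

Lemma tcode_fkey ts ts' : tcode (Node ts) = tcode (Node ts') -> fkey ts = fkey ts'.
Proof.
rewrite !tcode_node => -[]; rewrite !cats1 => /rcons_inj [] E.
apply: flatten_inj E => w; rewrite mem_sort => /mapP [c _ ->]; exact: prm_tcode.
Qed.

Local Open Scope ring_scope.

Definition eqv {X K : Type} (w : X -> rat) (k : X -> K) (a b : seq X) :=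
  forall h : K -> rat, \sum_(x <- a) w x * h (k x) = \sum_(x <- b) w x * h (k x).

Lemma sum_filter (X : Type) (P : pred X) (F : X -> rat) a :
  \sum_(x <- filter P a) F x = \sum_(x <- a) (if P x then F x else 0).
Proof.
elim: a => [|x a IH] /=; first by rewrite !big_nil.
rewrite big_cons -IH; case: (P x) => //=; [by rewrite big_cons|by rewrite add0r].
Qed.

Section Eqv.
Variables (X K : Type) (w : X -> rat) (k : X -> K).
Lemma eqv_refl a : eqv w k a a. Proof. by []. Qed.
Lemma eqv_sym a b : eqv w k a b -> eqv w k b a. Proof. by move=> H h; rewrite H. Qed.
Lemma eqv_trans a b c : eqv w k a b -> eqv w k b c -> eqv w k a c.
Proof. by move=> H1 H2 h; rewrite H1 H2. Qed.
Lemma eqv_cons x y a b : w x = w y -> k x = k y -> eqv w k a b -> eqv w k (x :: a) (y :: b).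
Proof. by move=> E1 E2 H h; rewrite !big_cons H E1 E2. Qed.
Lemma eqv_cat a b a' b' : eqv w k a a' -> eqv w k b b' -> eqv w k (a ++ b) (a' ++ b').
Proof. by move=> H1 H2 h; rewrite !big_cat H1 H2. Qed.
Lemma eqv_filter (P : pred X) (Q : K -> bool) a b :
  (forall x, P x = Q (k x)) -> eqv w k a b -> eqv w k (filter P a) (filter P b).
Proof.
move=> HP H h.
have E : forall x, (if P x then w x * h (k x) else 0) =
    w x * (fun z => if Q z then h z else 0) (k x).
  by move=> x /=; rewrite HP; case: (Q _); rewrite ?mulr0.
have L : forall c, \sum_(x <- c) (if P x then w x * h (k x) else 0) =
    \sum_(x <- c) w x * (fun z => if Q z then h z else 0) (k x).
  by move=> c; apply: eq_bigr => x _; exact: E.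
rewrite !sum_filter (L a) (L b); exact: (H (fun z => if Q z then h z else 0)).
Qed.
End Eqv.

Lemma eqv_map (X Y K L : Type) (w : X -> rat) (k : X -> K) (w' : Y -> rat) (k' : Y -> L)
  (f : X -> Y) (psi : K -> L) a b :
  (forall x, w' (f x) = w x) -> (forall x, k' (f x) = psi (k x)) ->
  eqv w k a b -> eqv w' k' (map f a) (map f b).
Proof.
move=> Hw Hk H h; rewrite !big_map.
under eq_bigr => x _ do rewrite Hw Hk.
under [RHS]eq_bigr => x _ do rewrite Hw Hk.
exact: (H (fun z => h (psi z))).
Qed.

Lemma eqv_allpairs (X1 X2 Y K1 K2 L : Type) (w1 : X1 -> rat) (k1 : X1 -> K1)
  (w2 : X2 -> rat) (k2 : X2 -> K2) (w : Y -> rat) (k : Y -> L)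
  (f : X1 -> X2 -> Y) (psi : K1 -> K2 -> L) a a' b b' :
  (forall x y, w (f x y) = w1 x * w2 y) -> (forall x y, k (f x y) = psi (k1 x) (k2 y)) ->
  eqv w1 k1 a a' -> eqv w2 k2 b b' ->
  eqv w k [seq f x y | x <- a, y <- b] [seq f x y | x <- a', y <- b'].
Proof.
move=> Hw Hk Ha Hb h; rewrite !big_allpairs_dep.
have E : forall a0, \sum_(x <- a0) \sum_(y <- b) w (f x y) * h (k (f x y)) =
   \sum_(x <- a0) w1 x * (fun z => \sum_(y <- b) w2 y * h (psi z (k2 y))) (k1 x).
  move=> a0; apply: eq_bigr => x _; rewrite mulr_sumr; apply: eq_bigr => y _.
  by rewrite Hw Hk mulrA.
have E' : forall a0, \sum_(x <- a0) \sum_(y <- b') w (f x y) * h (k (f x y)) =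
   \sum_(x <- a0) w1 x * (fun z => \sum_(y <- b') w2 y * h (psi z (k2 y))) (k1 x).
  move=> a0; apply: eq_bigr => x _; rewrite mulr_sumr; apply: eq_bigr => y _.
  by rewrite Hw Hk mulrA.
rewrite E E' (Ha (fun z => \sum_(y <- b) w2 y * h (psi z (k2 y)))); apply: eq_bigr => x _ /=; congr (_ * _); exact: (Hb (fun z => h (psi (k1 x) z))).
Qed.

Local Open Scope ring_scope.

Definition catp (x y : forest * forest) : forest * forest := (x.1 ++ y.1, x.2 ++ y.2).
Definition opts (c : tree) : seq (forest * forest) :=
  [:: ([:: c], [::])] ++ [seq (x.1, [:: x.2]) | x <- allcuts c].
Fixpoint goE (l : seq tree) : seq (forest * forest) :=
  match l with
  | [::] => [:: ([::], [::])]
  | c :: l' => [seq catp a b | a <- opts c, b <- goE l']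
  end.
Lemma allcuts_node ts : allcuts (Node ts) = [seq (x.1, Node x.2) | x <- goE ts].
Proof. by []. Qed.

Definition k2 (x : forest * forest) := (fkey x.1, fkey x.2).
Definition kc (x : forest * tree) := (fkey x.1, tcode x.2).
Definition psic (a b : seq (seq nat) * seq (seq nat)) :=
  (sort lexle (a.1 ++ b.1), sort lexle (a.2 ++ b.2)).
Lemma k2_catp x y : k2 (catp x y) = psic (k2 x) (k2 y).
Proof. by rewrite /k2 /psic /= !fkey_cat. Qed.
Notation eqvG := (eqv (fun _ : forest * forest => 1) k2).
Notation eqvC := (eqv (fun _ : forest * tree => 1) kc).

Lemma allpairs_catp_eqv a a' b b' : eqvG a a' -> eqvG b b' ->
  eqvG [seq catp x y | x <- a, y <- b] [seq catp x y | x <- a', y <- b'].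
Proof. by apply: eqv_allpairs => [x y|x y]; [rewrite mulr1|exact: k2_catp]. Qed.

Lemma fkey_perm3 (u v w : forest) : fkey (u ++ v ++ w) = fkey (v ++ u ++ w).
Proof. by apply/fkeyP; rewrite !map_cat perm_catCA. Qed.

Lemma goE_lcomm a b c :
  eqvG [seq catp x y | x <- a, y <- [seq catp x y | x <- b, y <- c]]
       [seq catp x y | x <- b, y <- [seq catp x y | x <- a, y <- c]].
Proof.
move=> h; rewrite !big_allpairs_dep.
have E : forall a b c, \sum_(x <- a) \sum_(w <- [seq catp x y | x <- b, y <- c])
    1 * h (k2 (catp x w)) =
    \sum_(x <- a) \sum_(y <- b) \sum_(z <- c) h (k2 (catp x (catp y z))).
  move=> a0 b0 c0; apply: eq_bigr => x _; rewrite big_allpairs_dep.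
  by apply: eq_bigr => y _; apply: eq_bigr => z _; rewrite mul1r.
rewrite !E exchange_big /=; apply: eq_bigr => y _; apply: eq_bigr => x _.
apply: eq_bigr => z _; rewrite /k2 /catp /=.
by rewrite (fkey_perm3 x.1) (fkey_perm3 x.2).
Qed.

Lemma goE_cat_perm l1 c l2 : eqvG (goE (l1 ++ c :: l2)) (goE (c :: l1 ++ l2)).
Proof.
elim: l1 => [|d l1 IH]; first exact: eqv_refl.
rewrite cat_cons.
apply: eqv_trans (allpairs_catp_eqv (@eqv_refl _ _ _ _ (opts d)) IH) _.
exact: goE_lcomm.
Qed.

Lemma opts_eqv c c' : tcode c = tcode c' -> eqvC (allcuts c) (allcuts c') ->
  eqvG (opts c) (opts c').
Proof.
move=> E H; rewrite /opts; apply: eqv_cat.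
  by apply: eqv_cons => //; rewrite /k2 /fkey /= E.
by apply: (eqv_map (w := fun _ => 1) (k := kc) (psi := fun z => (z.1, sort lexle [:: z.2]))).
Qed.

Lemma goE_inv l l' :
  (forall c, c \in l -> forall c', tcode c = tcode c' -> eqvC (allcuts c) (allcuts c')) ->
  perm_eq (map tcode l) (map tcode l') -> eqvG (goE l) (goE l').
Proof.
elim: l l' => [|c l IH] l' Hl.
  by case: l' => // c' l'; move/perm_size.
move=> Hp.
have : tcode c \in map tcode l' by rewrite -(perm_mem Hp) mem_head.
case/mapP => c' c'in Ec.
case/splitPr: c'in Hp => l1 l2 Hp.
apply: (eqv_trans (b := goE (c' :: l1 ++ l2))); last exact/eqv_sym/goE_cat_perm.
apply: allpairs_catp_eqv.
  apply: opts_eqv => //; apply: Hl => //; exact: mem_head.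
apply: IH => [c0 c0in|]; first by apply: Hl; rewrite inE c0in orbT.
rewrite -(perm_cons (tcode c)); apply: perm_trans Hp _.
rewrite !map_cat /= -Ec.
by rewrite -cat1s perm_catCA.
Qed.

Lemma allcuts_inv s s' : tcode s = tcode s' -> eqvC (allcuts s) (allcuts s').
Proof.
elim/tree_ind2: s s' => ts IH [ts'] E; rewrite !allcuts_node.
apply: (eqv_map (w := fun _ => 1) (k := k2) (psi := fun z => (z.1, 0%N :: flatten z.2 ++ [:: 1%N]))) => //.
apply: goE_inv => [c cin c' Ec|]; first exact: IH (In_mem cin) c' Ec.
exact/fkeyP/tcode_fkey.
Qed.

Local Open Scope ring_scope.

Notation eqvH := (eqv (fun x : rat * (forest * forest) => x.1) (fun x => k2 x.2)).

Lemma Delta_tree_inv c c' : tcode c = tcode c' -> eqvH (Delta_tree c) (Delta_tree c').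
Proof.
move=> E; rewrite /Delta_tree; apply: eqv_cat.
  apply: eqv_cons => //; first by rewrite /k2 /fkey /= E.
  by apply: eqv_cons => //; rewrite /k2 /fkey /= E.
apply: (eqv_map (w := fun _ => 1) (k := kc) (psi := fun z => (z.1, sort lexle [:: z.2]))) => //.
apply: (eqv_filter (Q := fun z => size z.1 != 0%N)) => [x|]; first by rewrite /kc /= size_fkey.
exact: allcuts_inv.
Qed.

Lemma mul2_eqv a a' b b' : eqvH a a' -> eqvH b b' -> eqvH (mul2 a b) (mul2 a' b').
Proof. by apply: (eqv_allpairs (psi := psic)) => [x y|x y] //; exact: (k2_catp x.2 y.2). Qed.

Lemma mul2_lcomm a b c : eqvH (mul2 a (mul2 b c)) (mul2 b (mul2 a c)).
Proof.
move=> h; rewrite /mul2 !big_allpairs_dep.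
have E : forall a b c : H2, \sum_(x <- a) \sum_(w <- [seq (x.1 * y.1, (x.2.1 ++ y.2.1, x.2.2 ++ y.2.2)) | x <- b, y <- c])
    (x.1 * w.1) * h (k2 (x.2.1 ++ w.2.1, x.2.2 ++ w.2.2)) =
    \sum_(x <- a) \sum_(y <- b) \sum_(z <- c) (x.1 * (y.1 * z.1)) * h (k2 (x.2.1 ++ y.2.1 ++ z.2.1, x.2.2 ++ y.2.2 ++ z.2.2)).
  move=> a0 b0 c0; apply: eq_bigr => x _; rewrite big_allpairs_dep.
  by apply: eq_bigr => y _; apply: eq_bigr => z _.
rewrite !E exchange_big /=; apply: eq_bigr => y _; apply: eq_bigr => x _.
apply: eq_bigr => z _; rewrite mulrCA /k2 /=.
by rewrite (fkey_perm3 x.2.1) (fkey_perm3 x.2.2).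
Qed.

Lemma DF_cons c g : Delta_forest (c :: g) = mul2 (Delta_tree c) (Delta_forest g).
Proof. by []. Qed.

Lemma DF_cat_perm l1 c l2 : eqvH (Delta_forest (l1 ++ c :: l2)) (Delta_forest (c :: l1 ++ l2)).
Proof.
elim: l1 => [|d l1 IH]; first exact: eqv_refl.
rewrite cat_cons DF_cons.
apply: eqv_trans (mul2_eqv (@eqv_refl _ _ _ _ (Delta_tree d)) IH) _.
rewrite !DF_cons; exact: mul2_lcomm.
Qed.

Lemma DF_inv_perm l l' : perm_eq (map tcode l) (map tcode l') ->
  eqvH (Delta_forest l) (Delta_forest l').
Proof.
elim: l l' => [|c l IH] l'.
  by case: l' => // c' l'; move/perm_size.
move=> Hp.
have : tcode c \in map tcode l' by rewrite -(perm_mem Hp) mem_head.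
case/mapP => c' c'in Ec.
case/splitPr: c'in Hp => l1 l2 Hp.
apply: (eqv_trans (b := Delta_forest (c' :: l1 ++ l2))); last exact/eqv_sym/DF_cat_perm.
rewrite !DF_cons; apply: mul2_eqv; first exact: Delta_tree_inv.
apply: IH.
rewrite -(perm_cons (tcode c)); apply: perm_trans Hp _.
rewrite !map_cat /= -Ec.
by rewrite -cat1s perm_catCA.
Qed.

Lemma DF_inv g g' : fkey g = fkey g' -> eqvH (Delta_forest g) (Delta_forest g').
Proof. by move/fkeyP; exact: DF_inv_perm. Qed.

Lemma coeff2E q f g : coeff2 q f g =
  \sum_(x <- q) x.1 * (fun z => if z == (fkey f, fkey g) then 1 else 0) (k2 x.2).
Proof.
rewrite /coeff2; elim: q => [|x q IH]; first by rewrite !big_nil.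
rewrite !big_cons IH /k2 /= xpair_eqE.
by case: ifP => _; rewrite ?mulr1 ?mulr0 ?add0r.
Qed.

Lemma coeff2_inv q q' f g : eqvH q q' -> coeff2 q f g = coeff2 q' f g.
Proof. by move=> H; rewrite !coeff2E; exact: (H (fun z => if z == (fkey f, fkey g) then 1 else 0)). Qed.

Lemma DeltaE p f g : coeff2 (Delta p) f g = \sum_(x <- p) x.1 * coeff2 (Delta_forest x.2) f g.
Proof.
rewrite /Delta /coeff2 big_flatten big_map; apply: eq_bigr => x _.
by rewrite big_map mulr_sumr.
Qed.

Local Open Scope ring_scope.

Definition sz (t : tree) := size (tcode t).
Definition szf (f : forest) := sumn (map sz f).

Lemma fkey1 t : fkey [:: t] = [:: tcode t].
Proof. by rewrite /fkey /= (sorted_sort lexle_trans). Qed.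

Lemma sz_pos t : (0 < sz t)%N.
Proof. by have [_ []] := prm_tcode t. Qed.

Lemma sz_node ts : sz (Node ts) = (szf ts).+2.
Proof.
rewrite /sz tcode_node /= size_cat /= addn1 size_flatten; congr _.+2.
rewrite /szf /shape; apply: perm_sumn.
have -> : map sz ts = map size (map tcode ts) by rewrite -map_comp.
by apply: perm_map; rewrite /fkey perm_sort.
Qed.

Lemma szf_cat u v : szf (u ++ v) = (szf u + szf v)%N.
Proof. by rewrite /szf map_cat sumn_cat. Qed.

Lemma goE_cons c l : goE (c :: l) = [seq catp a b | a <- opts c, b <- goE l].
Proof. by []. Qed.

Lemma goE_sz l : (forall c, c \in l -> forall x, x \in allcuts c -> (szf x.1 + sz x.2)%N = sz c) ->
  forall x, x \in goE l -> (szf x.1 + szf x.2)%N = szf l.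
Proof.
elim: l => [|c l IH] Hl x; first by rewrite inE => /eqP ->.
rewrite goE_cons; case/allpairsP => [[a b] [/= ain bin ->]] /=.
rewrite /catp /= !szf_cat addnACA (IH _ _ bin); last first.
  by move=> c0 c0in; apply: Hl; rewrite inE c0in orbT.
congr (_ + _)%N; move: ain; rewrite /opts inE => /predU1P [-> |].
  by rewrite /szf /= !addn0.
case/mapP => y yin -> /=; rewrite /szf /= addn0 -/(szf y.1).
by apply: Hl yin; exact: mem_head.
Qed.

Lemma allcuts_sz t x : x \in allcuts t -> (szf x.1 + sz x.2)%N = sz t.
Proof.
elim/tree_ind2: t x => ts IH x; rewrite allcuts_node => /mapP [y yin ->] /=.
rewrite !sz_node addnS addnS; congr _.+2.
by apply: goE_sz yin => c cin; apply: IH; exact: In_mem.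
Qed.

Lemma szf_pos f : f != [::] -> (0 < szf f)%N.
Proof. by case: f => // c f _; rewrite /szf /= ltn_addr // sz_pos. Qed.

Lemma cuts_lt c x : x \in cuts c -> (sz x.2 < sz c)%N.
Proof.
rewrite mem_filter => /andP [Hs xin]; rewrite -(allcuts_sz xin) -{1}[sz x.2]add0n ltn_add2r.
by apply: szf_pos; move: Hs; apply: contra => /eqP ->.
Qed.

Lemma Delta_treeP c y : y \in Delta_tree c ->
  [\/ y = (1, ([::], [:: c])), y = (1, ([:: c], [::])) |
      exists2 x, x \in cuts c & y = (1, (x.1, [:: x.2]))].
Proof.
rewrite /Delta_tree !inE => /orP [/eqP ->|/orP [/eqP ->|/mapP [x xin ->]]].
- by apply: Or31.
- by apply: Or32.
- by apply: Or33; exists x.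
Qed.

Lemma DF_w g w : w \in Delta_forest g -> w.1 = 1.
Proof.
elim: g w => [|c g IH] w; first by rewrite inE => /eqP ->.
rewrite DF_cons; case/allpairsP => [[y z] [/= yin zin ->]] /=. rewrite (IH _ zin) mulr1.
by case/Delta_treeP: yin => [->|->|[x _ ->]].
Qed.

Lemma DF_R0 g w : w \in Delta_forest g -> w.2.2 = [::] -> w.2.1 = g.
Proof.
elim: g w => [|c g IH] w; first by rewrite inE => /eqP ->.
rewrite DF_cons; case/allpairsP => [[y z] [/= yin zin ->]] /=.
case/Delta_treeP: yin => [->|->|[x _ ->]] //=.
by move=> E; rewrite (IH _ zin E).
Qed.

Lemma DF_R0mem g : (1, (g, [::])) \in Delta_forest g.
Proof.
elim: g => [|c g IH]; first by rewrite inE.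
rewrite DF_cons; apply/allpairsP; exists ((1, ([:: c], [::])), (1, (g, [::]))) => /=.
by rewrite /Delta_tree !inE eqxx orbT mulr1.
Qed.

Lemma DF_sz g w : w \in Delta_forest g -> (szf w.2.1 + szf w.2.2)%N = szf g.
Proof.
elim: g w => [|c g IH] w; first by rewrite inE => /eqP ->.
rewrite DF_cons; case/allpairsP => [[y z] [/= yin zin ->]] /=.
rewrite !szf_cat addnACA (IH _ zin) /szf /= -/(szf g); congr (_ + _)%N.
case/Delta_treeP: yin => [->|->|[x xin ->]] /=; rewrite ?addn0 //.
move: xin; rewrite mem_filter => /andP [_ xin].
by rewrite -(allcuts_sz xin).
Qed.

Lemma DF_K1 g M : all (fun c => sz c <= M)%N g -> forall w s, w \in Delta_forest g ->
  w.2.2 = [:: s] -> (M <= sz s)%N -> perm_eq (map tcode (s :: w.2.1)) (map tcode g).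
Proof.
elim: g => [|c g IH] Hall w s; first by rewrite inE => /eqP ->.
move: Hall => /= /andP [Hc Hall].
rewrite DF_cons; case/allpairsP => [[y z] [/= yin zin ->]] /=.
case/Delta_treeP: yin => [->|->|[x xin ->]] /=.
- by case=> <- E _; rewrite (DF_R0 zin E).
- move=> E Ms; have := IH Hall _ _ zin E Ms => /= Hp.
  apply: perm_trans (_ : perm_eq _ (tcode c :: tcode s :: map tcode z.2.1)) _.
    by rewrite -(cat1s (tcode s)) -(cat1s (tcode c)) perm_catCA.
  by rewrite perm_cons.
- case=> <- _ Ms; have := cuts_lt xin; rewrite ltnNge.
  by rewrite (leq_trans Hc Ms).
Qed.

Local Open Scope ring_scope.

Lemma coeff_fkey p f f' : fkey f = fkey f' -> coeff p f = coeff p f'.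
Proof. by rewrite /coeff => ->. Qed.

Lemma sum_ind (p : H) (P : pred (rat * forest)) c :
  \sum_(x <- p) x.1 * (if P x then c else 0) = (\sum_(x <- p | P x) x.1) * c.
Proof.
elim: p => [|x p IH]; first by rewrite !big_nil mul0r.
rewrite !big_cons IH; case: (P x); by rewrite ?mulr0 ?add0r ?mulrDl.
Qed.

Lemma sum_condb (T : Type) (s : seq T) (A : pred T) (b : bool) (F : T -> rat) :
  \sum_(x <- s | A x && b) F x = if b then \sum_(x <- s | A x) F x else 0.
Proof.
case: b; first by apply: eq_bigl => x; rewrite andbT.
by rewrite big_pred0 // => x; rewrite andbF.
Qed.

Lemma sum_bcond (T : Type) (s : seq T) (A : pred T) (b : bool) (F : T -> rat) :
  \sum_(x <- s | b && A x) F x = if b then \sum_(x <- s | A x) F x else 0.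
Proof. by rewrite -sum_condb; apply: eq_bigl => x; rewrite andbC. Qed.

Lemma prim_rhsE p f g : coeff2 (prim_rhs p) f g =
  (if fkey g == [::] then coeff p f else 0) + (if fkey f == [::] then coeff p g else 0).
Proof.
rewrite /prim_rhs /coeff2 big_cat !big_map /=.
have -> : fkey [::] = [::] by [].
by rewrite sum_condb sum_bcond ![[::] == _]eq_sym.
Qed.

Lemma sum_ones (q : H2) (P : pred (rat * (forest * forest))) :
  (forall w, w \in q -> w.1 = 1) -> \sum_(w <- q | P w) w.1 = (count P q)%:R.
Proof.
elim: q => [|w q IH] Hq; first by rewrite big_nil.
rewrite big_cons /= IH => [|w' h]; last by apply: Hq; rewrite inE h orbT.
rewrite Hq ?mem_head //; case: (P w); by rewrite ?add0n ?natrD.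
Qed.

Lemma coeff2_DF_nil g : coeff2 (Delta_forest g) [::] [::] = if g == [::] then 1 else 0.
Proof.
case: g => [|c g]; first by rewrite /coeff2 /= big_cons big_nil eqxx addr0.
rewrite /=; apply: big1_seq => w /andP [/andP [/eqP E1 /eqP E2] win].
have e1 : w.2.1 = [::] by apply/eqP; rewrite -size_eq0 -size_fkey E1.
have e2 : w.2.2 = [::] by apply/eqP; rewrite -size_eq0 -size_fkey E2.
have := DF_sz win; rewrite e1 e2 /= => E.
by have := szf_pos (isT : c :: g != [::]); rewrite -E.
Qed.

Lemma CL (p : H) (D : forest -> rat) :
  (forall g g', fkey g = fkey g' -> D g = D g') ->
  (forall g, coeff p g != 0 -> D g = 0) -> \sum_(x <- p) x.1 * D x.2 = 0.
Proof.
move=> HD; have [n] := ubnP (size p); elim: n p => [|n IH] p // Hs Hz.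
case: p Hs Hz => [|y p'] Hs Hz; first by rewrite big_nil.
rewrite (bigID (fun x => fkey x.2 == fkey y.2)) /=.
have -> : \sum_(x <- y :: p' | fkey x.2 == fkey y.2) x.1 * D x.2 =
          coeff (y :: p') y.2 * D y.2.
  rewrite /coeff big_distrl /=; apply: eq_bigr => x /eqP E; by rewrite (HD _ _ E).
have -> : coeff (y :: p') y.2 * D y.2 = 0.
  by case: (eqVneq (coeff (y :: p') y.2) 0) => [->|/Hz ->]; rewrite ?mul0r ?mulr0.
rewrite add0r -big_filter; apply: IH.
  rewrite size_filter /= eqxx /=; apply: leq_ltn_trans (count_size _ _) _; exact: Hs.
move=> g; rewrite /coeff big_filter_cond.
case: (eqVneq (fkey g) (fkey y.2)) => [Eg|Ng].
  by rewrite big_pred0 ?eqxx // => x; rewrite Eg andNb.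
move=> Hg; apply: Hz; move: Hg; rewrite /coeff.
congr (_ != _); apply: eq_bigl => x.
by case: (eqVneq (fkey x.2) (fkey g)) => [->|_]; rewrite ?Ng ?andbF.
Qed.

Lemma bigmax_attained (T : eqType) (s : seq T) (f : T -> nat) : s != [::] ->
  exists2 x, x \in s & f x = \max_(y <- s) f y.
Proof.
elim: s => // x s IH _; rewrite big_cons.
case: (eqVneq s [::]) => [->|Hs].
  by exists x; rewrite ?mem_head // big_nil maxn0.
have [y yin Ey] := IH Hs; case: leqP => Hle.
  by exists y; rewrite // inE yin orbT.
by exists x; rewrite ?mem_head.
Qed.

Theorem lemma9p4 (p : H) : primitive p -> pic_zero p -> H_zero p.
Proof.
move=> Hprim Hpic.
have H0 : coeff p [::] = 0.
  have := Hprim [::] [::]; rewrite DeltaE prim_rhsE.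
  rewrite (eq_bigr (fun x => x.1 * (if x.2 == [::] then 1 else 0))); last first.
    by move=> x _; rewrite coeff2_DF_nil.
  rewrite sum_ind mulr1 /=.
  have -> : \sum_(x <- p | x.2 == [::]) x.1 = coeff p [::].
    by apply: eq_bigl => x; rewrite -size_eq0 -size_fkey size_eq0.
  by move=> E; apply: (addrI (coeff p [::])); rewrite -E addr0.
move=> F; apply/eqP; apply: contraT => HF.
pose S := [seq x.2 | x <- p & coeff p x.2 != 0].
have memS : forall g, coeff p g != 0 -> exists2 g', g' \in S & fkey g' = fkey g.
  move=> g Hg; case: (boolP (has (fun x => fkey x.2 == fkey g) p)) => [Hh|Hn]; last first.
    by move: Hg; rewrite /coeff big_hasC // eqxx.
  case/hasP: Hh => x xin /eqP Ex; exists x.2 => //; apply/mapP; exists x => //.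
  by rewrite mem_filter xin andbT (coeff_fkey p Ex).
have SnotNil : S != [::] by have [g' g'in _] := memS F HF; apply/eqP => E; rewrite E in g'in.
pose mx := fun g : forest => \max_(k <- fkey g) size k.
pose M := \max_(g <- S) mx g.
have Hbound : forall g, coeff p g != 0 -> (mx g <= M)%N.
  move=> g /memS [g' g'in Eg]; rewrite /mx -Eg; exact: (leq_bigmax_seq (F := mx)).
have Htree : forall g c, c \in g -> (sz c <= mx g)%N.
  move=> g c cin; rewrite /mx /sz; apply: (leq_bigmax_seq (F := size)) => //.
  by rewrite mem_sort map_f.
have [F0 F0in EF0] := bigmax_attained mx SnotNil.
have HF0 : coeff p F0 != 0 by move: F0in => /mapP [x]; rewrite mem_filter => /andP [Hx _] ->.
have F0nil : F0 != [::] by apply/eqP => E; move: HF0; rewrite E H0 eqxx.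
have [t tin Et] : exists2 t, t \in F0 & sz t = M.
  have : fkey F0 != [::] by rewrite -size_eq0 size_fkey size_eq0.
  move/(bigmax_attained size) => [k kin Ek]; move: kin; rewrite mem_sort => /mapP [t tin Ekt].
  by exists t => //; rewrite /sz -Ekt Ek; exact: EF0.
have [F1 [F2 EF]] : exists F1 F2, F0 = F1 ++ t :: F2.
  by case/splitPr: tin => F1 F2; exists F1, F2.
pose A := F1 ++ F2.
have Anil : A != [::].
  apply/eqP => EA; have [e1 e2] : F1 = [::] /\ F2 = [::].
    by move: EA; rewrite /A; case: (F1) => // -[].
  by move: HF0; rewrite EF e1 e2 /= Hpic eqxx.
have EkF : fkey F0 = fkey (t :: A).
  by apply/fkeyP; rewrite EF /A !map_cat /= map_cat -cat1s perm_catCA.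
pose G := fun g => coeff2 (Delta_forest g) A [:: t].
have GF0 : G F0 != 0.
  rewrite /G (coeff2_inv _ _ (DF_inv EkF)) /coeff2 sum_ones; last exact: DF_w.
  rewrite pnatr_eq0 -lt0n -has_count; apply/hasP; exists (1, (A, [:: t])); last by rewrite /= !eqxx.
  rewrite DF_cons; apply/allpairsP; exists ((1, ([::], [:: t])), (1, (A, [::]))) => /=.
  by rewrite DF_R0mem /Delta_tree mem_head mulr1.
have Hsum : \sum_(x <- p) x.1 * G x.2 = 0.
  have := Hprim A [:: t]; rewrite DeltaE prim_rhsE fkey1 /= => ->.
  by rewrite -size_eq0 size_fkey size_eq0 (negbTE Anil) addr0.
have Hsum' : \sum_(x <- p) x.1 * G x.2 =
    \sum_(x <- p) x.1 * (if fkey x.2 == fkey F0 then G F0 else 0).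
  pose D := fun g => G g - (if fkey g == fkey F0 then G F0 else 0).
  have HD : forall g g', fkey g = fkey g' -> D g = D g'.
    by move=> g g' E; rewrite /D /G (coeff2_inv _ _ (DF_inv E)) E.
  have HZ : forall g, coeff p g != 0 -> D g = 0.
    move=> g Hg; rewrite /D; case: ifP => [/eqP E|Hne].
      by rewrite /G (coeff2_inv _ _ (DF_inv E)) subrr.
    rewrite subr0 /G /coeff2; apply: big1_seq => w /andP [/andP [/eqP E1 /eqP E2] win].
    exfalso; move: Hne E2; case Ew: w.2.2 => [|s [|s' r]] //; rewrite ?fkey1 //.
    - move=> Hne [Est].
      have Hall : all (fun c => sz c <= M)%N g.
        by apply/allP => c cin; exact: leq_trans (Htree g c cin) (Hbound g Hg).
      have Hp := DF_K1 Hall win Ew.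
      rewrite /sz Est -/(sz t) Et in Hp; have := Hp (leqnn _) => /fkeyP Eg.
      move/negbT/negP: Hne; apply; apply/eqP; rewrite -Eg EkF.
      by rewrite -cat1s fkey_cat fkey1 Est E1 -fkey1 -fkey_cat.
    - by move=> _ /(congr1 size); rewrite size_fkey.
  have HC := @CL p D HD HZ.
  have E : \sum_(x <- p) x.1 * D x.2 = \sum_(x <- p) x.1 * G x.2 -
      \sum_(x <- p) x.1 * (if fkey x.2 == fkey F0 then G F0 else 0).
    by rewrite -sumrB; apply: eq_bigr => x _; rewrite mulrBr.
  by apply/eqP; rewrite -subr_eq0 -E HC.
have : coeff p F0 * G F0 = 0.
  by rewrite /coeff -sum_ind -Hsum' Hsum.
by move/eqP; rewrite mulf_eq0 (negbTE HF0) (negbTE GF0).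
Qed.
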